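(* Suppose Assumption 3.2(i) and Assumption 4.2 hold, and for each $r>0$ let $0<a_r<b_r<\infty$ be numbers as in Assumption 4.2. Then $\limsup_{r\downarrow0}b_r<\infty$.
   Context: Standing setup. $W$ is a standard one-dimensional Brownian motion. $\mu,\sigma:[0,\infty)\to\mathbb R$ are continuous with $\sigma(x)>0$ for $x>0$, such that the SDE $dX_0(s)=\mu(X_0(s))ds+\sigma(X_0(s))dW(s)$ has a weak solution unique in law with state space $[0,\infty)$, for which $0$ is an unattainable (entrance or natural) boundary point and $\infty$ is a natural boundary point. The generator is $\mathcal Lf(x)=\frac12\sigma^2(x)f''(x)+\mu(x)f'(x)$. Fix constants $0<c_1<c_2$ and a nonnegative continuous function $h$ on $[0,\infty)$. A control is an adapted càdlàg process $\varphi=\xi-\eta$, where $\xi,\eta$ are nonnegative, nondecreasing, càdlàg, $\xi(0-)=\eta(0-)=0$, and the measures $d\xi,d\eta$ are mutually singular; it is admissible if the controlled equation $dX(s)=\mu(X(s))ds+\sigma(X(s))dW(s)+d\xi(s)-d\eta(s)$, $X(0-)=x\ge0$, has a unique nonnegative weak solution $X$. For $x\ge0$, $\mathscr A_x$ is the set of admissible controls with $\mathbb E_x[\xi(T)]\le K_1(x)T^n+K_2(x)$ for all $T>0$, where $K_1,K_2$ are fixed positive functions and $n\ge1$ a fixed integer. Define $V_r(x)=\sup_{\varphi\in\mathscr A_x}\mathbb E_x\big[\int_0^\infty e^{-rs}(h(X(s))ds+c_1d\eta(s)-c_2d\xi(s))\big]$ for $r>0$. Assumption 3.2(i): $\lim_{x\downarrow0}[h(x)+c_2\mu(x)]\le0$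 and $\lim_{x\to\infty}[h(x)+c_1\mu(x)]<0$. Assumption 4.2: For each $r>0$ there exist $0<a_r<b_r<\infty$ such that $V_r\in C^2([0,\infty))$ and: for $x\in(a_r,b_r)$, $rV_r(x)-\mathcal LV_r(x)-h(x)=0$ and $c_1\le V_r'(x)\le c_2$; for $x\ge b_r$, $rV_r(x)-\mathcal LV_r(x)-h(x)\ge0$ and $V_r'(x)=c_1$; for $x\le a_r$, $rV_r(x)-\mathcal LV_r(x)-h(x)\ge0$ and $V_r'(x)=c_2$. *)

(* Defs.v *)
From Stdlib Require Import Reals.
From Coquelicot Require Import Coquelicot.
Open Scope R_scope.

Definition is_derive_nonneg (f f' : R -> R) : Prop :=
  (forall x, 0 < x -> is_derive f x (f' x)) /\
  filterlim (fun y => (f y - f 0) / (y - 0)) (at_right 0) (locally (f' 0)).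

Definition continuous_nonneg (f : R -> R) : Prop :=
  (forall x, 0 < x -> continuous f x) /\
  filterlim f (at_right 0) (locally (f 0)).

Definition C2_nonneg (f f1 f2 : R -> R) : Prop :=
  is_derive_nonneg f f1 /\ is_derive_nonneg f1 f2 /\ continuous_nonneg f2.

(* generator L f (x) = 1/2 sigma^2 f'' + mu f', written via f1 = f', f2 = f'' *)
Definition gen (mu sigma f1 f2 : R -> R) (x : R) : R :=
  / 2 * (sigma x) ^ 2 * f2 x + mu x * f1 x.

Definition assumption_4_2_at (mu sigma h : R -> R) (c1 c2 r : R)
    (V : R -> R) (a b : R) : Prop :=
  0 < a /\ a < b /\
  exists V1 V2 : R -> R,
    C2_nonneg V V1 V2 /\
    (forall x, a < x < b ->
        r * V x - gen mu sigma V1 V2 x - h x = 0 /\ c1 <= V1 x <= c2) /\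
    (forall x, b <= x ->
        r * V x - gen mu sigma V1 V2 x - h x >= 0 /\ V1 x = c1) /\
    (forall x, 0 <= x <= a ->
        r * V x - gen mu sigma V1 V2 x - h x >= 0 /\ V1 x = c2).

Definition assumption_3_2_i (mu h : R -> R) (c1 c2 : R) : Prop :=
  (exists l : Rbar, Rbar_le l 0 /\
     filterlim (fun x => h x + c2 * mu x) (at_right 0) (Rbar_locally l)) /\
  (exists l : Rbar, Rbar_lt l 0 /\
     filterlim (fun x => h x + c1 * mu x) (Rbar_locally p_infty) (Rbar_locally l)).

(* Main.v *)
Require Import Defs.
From Stdlib Require Import Reals.
From Coquelicot Require Import Coquelicot.
From Stdlib Require Import Lra.
Open Scope R_scope.

Lemma cont_pt (f : R -> R) b c :
  continuous f b -> (forall d, 0 < d -> exists x, Rabs (x - b) < d /\ f x = c) -> f b = c.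
Proof.
  intros Hc H.
  destruct (Req_dec (f b) c) as [E|N]; auto. exfalso.
  assert (Hp : 0 < Rabs (f b - c) / 2).
  { assert (0 < Rabs (f b - c)) by (apply Rabs_pos_lt; lra). lra. }
  pose proof (proj1 (filterlim_locally f (f b)) Hc (mkposreal _ Hp)) as L.
  destruct L as [d Hd].
  destruct (H d (cond_pos d)) as [x [Hx Ex]].
  specialize (Hd x Hx). change (Rabs (f x - f b) < Rabs (f b - c) / 2) in Hd.
  rewrite Ex in Hd. rewrite Rabs_minus_sym in Hd. lra.
Qed.

Lemma cont_F (f g : R -> R) b : continuous f b -> continuous g b ->
  continuous (fun x => f x * g x) b.
Proof. intros; apply (continuous_mult f g); auto. Qed.
Lemma cont_M (f g : R -> R) b : continuous f b -> continuous g b ->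
  continuous (fun x => f x - g x) b.
Proof. intros; apply (continuous_minus f g); auto. Qed.
Lemma cont_P (f g : R -> R) b : continuous f b -> continuous g b ->
  continuous (fun x => f x + g x) b.
Proof. intros; apply (continuous_plus f g); auto. Qed.

Theorem lemma4p6 (mu sigma h : R -> R) (c1 c2 : R) (V : R -> R -> R) (a b : R -> R) :
  continuous_nonneg mu -> continuous_nonneg sigma ->
  (forall x, 0 < x -> 0 < sigma x) ->
  continuous_nonneg h -> (forall x, 0 <= x -> 0 <= h x) ->
  0 < c1 -> c1 < c2 ->
  (forall r x, 0 < r -> 0 <= x -> 0 <= V r x) ->
  assumption_3_2_i mu h c1 c2 ->
  (forall r, 0 < r -> assumption_4_2_at mu sigma h c1 c2 r (V r) (a r) (b r)) ->
  exists M delta, 0 < delta /\ forall r, 0 < r < delta -> b r <= M.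
Proof.
  intros [Cmu _] [Csig _] _ [Ch _] _ _ _ HV [_ [l [Hl Hlim]]] H42.
  assert (HM : exists M, forall x, M < x -> h x + c1 * mu x < 0).
  { destruct l as [l| |]; simpl in Hl; try contradiction.
    - assert (Hp : 0 < - l / 2) by lra.
      destruct (Hlim (fun y => Rabs (y - l) < - l / 2)) as [M HM].
      { exists (mkposreal _ Hp). intros y Hy. exact Hy. }
      exists M. intros x Hx. specialize (HM x Hx). simpl in HM.
      apply Rabs_def2 in HM. lra.
    - destruct (Hlim (fun y => y < 0)) as [M HM].
      { exists 0. intros y Hy. exact Hy. }
      exists M. exact HM. }
  destruct HM as [M HM].
  exists (Rmax M 1), 1. split; [lra|].
  intros r Hr.
  destruct (H42 r (proj1 Hr)) as [Ha [Hab [V1 [V2 [[[DV _] [[DV1 _] [CV2 _]]] [Hin [Hge _]]]]]]].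
  set (B := b r) in *.
  assert (HB : 0 < B) by lra.
  assert (Z : forall x, B < x -> V2 x = 0).
  { intros x Hx.
    assert (D : is_derive (fun _ => c1) x (V2 x)).
    { apply (is_derive_ext_loc V1). 
      - assert (Hp : 0 < x - B) by lra. exists (mkposreal _ Hp).
        intros t Ht. change (Rabs (t - x) < x - B) in Ht.
        apply Rabs_def2 in Ht. apply (proj2 (Hge t ltac:(lra))).
      - apply DV1. lra. }
    apply is_derive_unique in D. rewrite <- D.
    apply is_derive_unique. apply (@is_derive_const R_AbsRing R_NormedModule). }
  assert (Z0 : V2 B = 0).
  { apply cont_pt. apply CV2; lra.
    intros d Hd. exists (B + d/2). split.
    - rewrite Rabs_right; lra.
    - apply Z. lra. }
  assert (E : r * V r B - gen mu sigma V1 V2 B - h B = 0).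
  { apply (cont_pt (fun x => r * V r x - gen mu sigma V1 V2 x - h x)).
    - unfold gen.
      assert (cV : continuous (V r) B).
      { apply (@ex_derive_continuous R_AbsRing R_NormedModule). eexists. apply DV. lra. }
      assert (cV1 : continuous V1 B).
      { apply (@ex_derive_continuous R_AbsRing R_NormedModule). eexists. apply DV1. lra. }
      assert (cs : continuous sigma B) by (apply Csig; lra).
      assert (cm : continuous mu B) by (apply Cmu; lra).
      assert (ch : continuous h B) by (apply Ch; lra).
      assert (cV2 : continuous V2 B) by (apply CV2; lra).
      apply cont_M; auto. apply cont_M.
      + apply cont_F; auto. apply continuous_const.
      + apply cont_P; apply cont_F; auto.
        apply cont_F; [apply continuous_const|].
        simpl. apply cont_F; auto. apply cont_F; auto. apply continuous_const.
    - intros d Hd. exists (B - Rmin d (B - a r) / 2). split.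
      + rewrite Rabs_left; [|assert (0 < Rmin d (B - a r)) by (apply Rmin_pos; lra); lra].
        assert (Rmin d (B - a r) <= d) by apply Rmin_l. lra.
      + apply (fun x H => proj1 (Hin x H)). assert (Rmin d (B - a r) <= B - a r) by apply Rmin_r.
        assert (0 < Rmin d (B - a r)) by (apply Rmin_pos; lra). lra. }
  assert (EV1 : V1 B = c1) by (apply (proj2 (Hge B ltac:(lra)))).
  unfold gen in E. rewrite Z0, EV1 in E.
  assert (0 <= V r B) by (apply HV; lra).
  destruct (Rle_or_lt B (Rmax M 1)) as [L|L]; auto.
  assert (h B + c1 * mu B < 0) by (apply HM; pose proof (Rmax_l M 1); lra).
  nra.
Qed.
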